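(* Let $d_1,\dots,d_n$ be positive square-free integers with $[\mathbb{Q}(\sqrt{d_1},\dots,\sqrt{d_n}):\mathbb{Q}]=2^n=r$, $F=\mathbb{Q}(\sqrt{d_1},\dots,\sqrt{d_n})$, let $\mathfrak{M}$ be a fractional ideal of $F$ and $\delta=\min(\mathfrak{M})$. Suppose $s\in\mathfrak{M}$, $s\ne0$, satisfies $|\sigma_j(s)|\le\delta/\sqrt{r}$ for all $j=1,\dots,r$. Then $\|\sigma(s)\|=\delta$ (so $s\in B_{\mathfrak{M}}$), $|\sigma_j(s)|=\delta/\sqrt r$ for all $j$, and $s=x\sqrt{d_T}$ for some $x\in\mathbb{Q}$ and some $T\subseteq\{1,\dots,n\}$; in particular $2^n x^2 d_T=\delta^2$, i.e. the coefficient vector of $s$ is a solution of $2^n\sum_{T'}d_{T'}X_{T'}^2=\delta^2$ with at most one nonzero coordinate.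
   Context: $\sigma_1,\dots,\sigma_r$ are the real embeddings of $F$, $\|\sigma(s)\|=\sqrt{\sum_j\sigma_j(s)^2}$, $\min(\mathfrak{M})=\min\{\|\sigma(t)\|: t\in\mathfrak{M},\ t\ne0\}$, $B_{\mathfrak{M}}=\{t\in\mathfrak{M}:\|\sigma(t)\|=\min(\mathfrak{M})\}$. For $T\subseteq\{1,\dots,n\}$, $d_T=\prod_{l\in T}d_l$ ($d_\emptyset=1$) and $\sqrt{d_T}=\prod_{l\in T}\sqrt{d_l}$; every element of $F$ is uniquely $\sum_T x_T\sqrt{d_T}$ with $x_T\in\mathbb{Q}$ (its coefficient vector). *)

(* Defs.v *)
From HB Require Import structures.
From mathcomp Require Import all_boot all_order all_algebra.
From mathcomp Require Import reals.
Set Implicit Arguments. Unset Strict Implicit. Unset Printing Implicit Defensive.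
Import Order.TTheory GRing.Theory Num.Theory.
Local Open Scope ring_scope.

Definition squarefree (d : nat) : Prop :=
  forall p : nat, prime p -> ~~ (p * p %| d)%N.

Definition dT (n : nat) (d : 'I_n -> nat) (T : {set 'I_n}) : nat :=
  (\prod_(l in T) d l)%N.

Definition sqdT (R : realType) (n : nat) (d : 'I_n -> nat) (T : {set 'I_n}) : R :=
  \prod_(l in T) Num.sqrt ((d l)%:R : R).

(* the element sum_T x_T sqrt(d_T) of F = Q(sqrt d_1,...,sqrt d_n), F viewed inside R *)
Definition elt (R : realType) (n : nat) (d : 'I_n -> nat) (x : {set 'I_n} -> rat) : R :=
  \sum_(T : {set 'I_n}) ratr (x T) * sqdT R d T.

(* The 2^n real embeddings of F, indexed by e : {set 'I_n} (the set of l with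
   sigma(sqrt d_l) = - sqrt d_l):  sigma_e(sum_T x_T sqrt d_T)
   = sum_T x_T (-1)^{|T cap e|} sqrt d_T.  sigma_set0 is the identity embedding. *)
Definition emb (R : realType) (n : nat) (d : 'I_n -> nat) (e : {set 'I_n})
  (x : {set 'I_n} -> rat) : R :=
  \sum_(T : {set 'I_n}) ratr (x T) * (-1) ^+ #|T :&: e| * sqdT R d T.

Definition embnorm (R : realType) (n : nat) (d : 'I_n -> nat)
  (x : {set 'I_n} -> rat) : R :=
  Num.sqrt (\sum_(e : {set 'I_n}) emb R d e x ^+ 2).

(* [F : Q] = 2^n, i.e. the 2^n spanning elements sqrt(d_T) are Q-linearly independent *)
Definition full_degree (R : realType) (n : nat) (d : 'I_n -> nat) : Prop :=
  forall x : {set 'I_n} -> rat, elt R d x = 0 -> forall T, x T = 0.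

Definition inF (R : realType) (n : nat) (d : 'I_n -> nat) (t : R) : Prop :=
  exists x : {set 'I_n} -> rat, t = elt R d x.

Definition alg_int (R : realType) (t : R) : Prop :=
  exists p : {poly int}, p \is monic /\ (map_poly (fun z : int => z%:~R) p).[t] = 0.

Definition inOF (R : realType) (n : nat) (d : 'I_n -> nat) (t : R) : Prop :=
  inF d t /\ alg_int t.

Definition frac_ideal (R : realType) (n : nat) (d : 'I_n -> nat) (M : R -> Prop) : Prop :=
  (forall t, M t -> inF d t) /\
  M 0 /\
  (forall a b, M a -> M b -> M (a + b)) /\
  (forall a m, inOF d a -> M m -> M (a * m)) /\
  (exists m, M m /\ m != 0) /\
  (exists c, [/\ inOF d c, c != 0 & forall m, M m -> inOF d (c * m)]).

Definition is_minM (R : realType) (n : nat) (d : 'I_n -> nat) (M : R -> Prop)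
  (delta : R) : Prop :=
  (exists y, [/\ M (elt R d y), elt R d y != 0 & embnorm R d y = delta]) /\
  (forall y, M (elt R d y) -> elt R d y != 0 -> delta <= embnorm R d y).

(* Main.v *)
Require Import Defs.
From HB Require Import structures.
From mathcomp Require Import all_boot all_order all_algebra.
From mathcomp Require Import reals.
From mathcomp Require Import lra.
Import Order.TTheory GRing.Theory Num.Theory.
Local Open Scope ring_scope.

Lemma cardI1 (n : nat) (T : {set 'I_n}) (i : 'I_n) :
  #|T :&: [set i]| = (i \in T) :> nat.
Proof.
case: (boolP (i \in T)) => h.
  have -> : T :&: [set i] = [set i].
    by apply/setP => j; rewrite !inE; case: (j =P i) => [->|]; rewrite ?h ?andbF.
  by rewrite cards1.
have -> : T :&: [set i] = set0.
  by apply/setP => j; rewrite !inE; case: (j =P i) => [->|]; rewrite ?(negbTE h) ?andbF.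
by rewrite cards0.
Qed.

Lemma sign_lemma (R : realType) (n : nat) (d : 'I_n -> nat)
  (hdeg : full_degree R d) (s : {set 'I_n} -> rat) (e : {set 'I_n}) (eps : rat) :
  emb R d e s = ratr eps * elt R d s ->
  forall T, s T * (-1) ^+ #|T :&: e| = eps * s T.
Proof.
move=> h T; apply/eqP; rewrite -subr_eq0; apply/eqP.
pose z := fun T => s T * (-1) ^+ #|T :&: e| - eps * s T.
apply: (hdeg z).
rewrite /elt /z.
have -> : \sum_T0 ratr (s T0 * (-1) ^+ #|T0 :&: e| - eps * s T0) * sqdT R d T0
   = emb R d e s - ratr eps * elt R d s.
  rewrite /emb /elt mulr_sumr -sumrB; apply: eq_bigr => U _.
  by rewrite rmorphB !rmorphM rmorphXn rmorphN1 mulrBl !mulrA.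
by rewrite h subrr.
Qed.

Lemma aux (R : realType) (a b c : R) : a * (b * c) = a * c * b.
Proof. by rewrite -mulrA [c * b]mulrC. Qed.

Theorem mainTheorem9 (R : realType) (n : nat) (d : 'I_n -> nat)
  (hdpos : forall l, (0 < d l)%N) (hdsq : forall l, squarefree (d l))
  (hdeg : full_degree R d)
  (M : R -> Prop) (hM : frac_ideal d M) (delta : R) (hdelta : is_minM d M delta)
  (s : {set 'I_n} -> rat) (hsM : M (elt R d s)) (hs0 : elt R d s != 0)
  (hsb : forall e : {set 'I_n},
      `|emb R d e s| <= delta / Num.sqrt ((2 ^ n)%N%:R)) :
  [/\ embnorm R d s = delta,
      (forall e : {set 'I_n}, `|emb R d e s| = delta / Num.sqrt ((2 ^ n)%N%:R)) &
      exists (x : rat) (T : {set 'I_n}),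
        [/\ (forall T', s T' = if T' == T then x else 0),
            (2 ^ n)%N%:R * ratr x ^+ 2 * (dT d T)%:R = delta ^+ 2 &
            (2 ^ n)%N%:R * \sum_(T' : {set 'I_n}) (dT d T')%:R * ratr (s T') ^+ 2
              = delta ^+ 2]].
Proof.
set r : R := (2 ^ n)%N%:R.
set b : R := delta / Num.sqrt r.
have r0 : 0 < r by rewrite ltr0n expn_gt0.
have card2 : #|{: {set 'I_n}}| = (2 ^ n)%N.
  by rewrite -cardsT -powersetT card_powerset cardsT card_ord.
have d0 : 0 <= delta.
  case: hdelta => [[y [_ _ <-]] _]; exact: sqrtr_ge0.
have b0 : 0 <= b by rewrite divr_ge0 // sqrtr_ge0.
have b2 : b ^+ 2 = delta ^+ 2 / r.
  by rewrite /b expr_div_n sqr_sqrtr // ltW.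
have hmin : delta <= embnorm R d s by case: hdelta => _ H; exact: H.
set S := \sum_(e : {set 'I_n}) emb R d e s ^+ 2.
have S0 : 0 <= S by apply: sumr_ge0 => e _; exact: sqr_ge0.
have Sle : S <= delta ^+ 2.
  apply: (@le_trans _ _ (\sum_(e : {set 'I_n}) b ^+ 2)).
    apply: ler_sum => e _; rewrite -real_normK ?num_real //.
    by rewrite ler_sqr ?nnegrE ?normr_ge0 ?hsb.
  rewrite sumr_const card2 b2 -mulr_natr -/r.
  by rewrite mulrAC -mulrA divff ?mulr1 // gt_eqF.
have Sge : delta ^+ 2 <= S.
  have := hmin; rewrite /embnorm -/S => h.
  by rewrite -(sqr_sqrtr S0) ler_sqr ?nnegrE ?sqrtr_ge0.
have SE : S = delta ^+ 2 by apply/eqP; rewrite eq_le Sle Sge.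
have normE : embnorm R d s = delta by rewrite /embnorm -/S SE sqrtr_sqr ger0_norm.
have embsq : forall e, emb R d e s ^+ 2 = b ^+ 2.
  move=> e.
  have hsum : \sum_(e0 : {set 'I_n}) (b ^+ 2 - emb R d e0 s ^+ 2) = 0.
    rewrite sumrB sumr_const card2 -/S SE b2 -mulr_natr.
    by rewrite mulrAC -mulrA divff ?mulr1 ?subrr // gt_eqF.
  have := psumr_eq0P _ hsum.
  move=> H; apply/eqP; rewrite eq_sym -subr_eq0; apply/eqP; apply: H => //.
  move=> e0 _; rewrite subr_ge0 -real_normK ?num_real //.
  by rewrite ler_sqr ?nnegrE ?normr_ge0 ?hsb.
have normb : forall e, `|emb R d e s| = b.
  by move=> e; rewrite -sqrtr_sqr embsq sqrtr_sqr ger0_norm.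
have emb0 : emb R d set0 s = elt R d s.
  rewrite /emb /elt; apply: eq_bigr => T _; by rewrite setI0 cards0 expr0 mulr1.
have hsign : forall e, exists eps : rat, forall T, s T * (-1) ^+ #|T :&: e| = eps * s T.
  move=> e.
  have : emb R d e s ^+ 2 == elt R d s ^+ 2 by rewrite embsq -emb0 embsq.
  rewrite eqf_sqr => /orP [/eqP h | /eqP h].
    exists 1; apply: (@sign_lemma R n d hdeg s e); rewrite h. by rewrite rmorph1 mul1r.
  exists (-1); apply: (@sign_lemma R n d hdeg s e); rewrite h. by rewrite rmorphN1 mulN1r.
have [T0 hT0] : exists T0, s T0 != 0.
  case: (pickP (fun T => s T != 0)) => [T0 h|h]; first by exists T0.
  move: hs0; rewrite /elt big1 ?eqxx // => T _.
  by have := h T => /= /negbFE /eqP ->; rewrite rmorph0 mul0r.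
have uniq : forall T', s T' != 0 -> T' = T0.
  move=> T' hT'; apply/eqP; apply: contraT => hne.
  have [i hi] : exists i, (i \in T') != (i \in T0).
    case: (pickP (fun i => (i \in T') != (i \in T0))) => [i h|h]; first by exists i.
    move/negP: hne; case; apply/eqP/setP => i; have := h i => /= /negbFE /eqP //.
  have [eps heps] := hsign [set i].
  have h1 := heps T'; have h2 := heps T0.
  rewrite cardI1 mulrC in h1; rewrite cardI1 mulrC in h2.
  have e1 := mulIf hT' h1; have e2 := mulIf hT0 h2.
  move: hi e1 e2; case: (i \in T'); case: (i \in T0) => //= _.
    rewrite expr1 expr0 => <- H; move: H; lra.
  rewrite expr1 expr0 => <- H; move: H; lra.
have hsing : forall T', s T' = if T' == T0 then s T0 else 0.
  move=> T'; case: eqP => [-> //|hne].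
  by apply/eqP; apply: contraT => h; case: hne; exact: uniq.
have sq2 : sqdT R d T0 ^+ 2 = (dT d T0)%:R.
  rewrite /sqdT /dT -prodrXl natr_prod; apply: eq_bigr => l _.
  by rewrite sqr_sqrtr // ler0n.
have eltE : elt R d s = ratr (s T0) * sqdT R d T0.
  rewrite /elt (bigD1 T0) //= big1 ?addr0 // => T' hT'.
  by rewrite hsing (negbTE hT') rmorph0 mul0r.
have sumE : \sum_(T' : {set 'I_n}) ((dT d T')%:R : R) * ratr (s T') ^+ 2
    = (dT d T0)%:R * ratr (s T0) ^+ 2.
  rewrite (bigD1 T0) //= big1 ?addr0 // => T' hT'.
  by rewrite hsing (negbTE hT') rmorph0 expr0n mulr0.
have key : r * ratr (s T0) ^+ 2 * (dT d T0)%:R = delta ^+ 2.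
  have := embsq set0; rewrite emb0 eltE exprMn sq2 b2 -mulrA => ->.
  by rewrite mulrCA divff ?mulr1 // gt_eqF.
split => //.
exists (s T0), T0; split => //.
rewrite sumE -key; exact: aux.
Qed.
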